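(* If $G$ is a connected triangle-free graph on $n\ge 3$ vertices, then $\gamma_{rdR}(G)\le 2\gamma_{rR}(G)-2$.
   Context: All graphs are finite and simple. An RDRD function of $G$ is a function $f:V(G)\to\{0,1,2,3\}$ such that every vertex with value $0$ has at least two neighbors with value $2$ or at least one neighbor with value $3$, every vertex with value $1$ has a neighbor with value $2$ or $3$, and the subgraph induced by the vertices with value $0$ has no isolated vertices; $\gamma_{rdR}(G)$ is the minimum of $\sum_v f(v)$ over RDRD functions. A restrained Roman dominating function (RRD function) of $G$ is a function $f:V(G)\to\{0,1,2\}$ such that every vertex with value $0$ has a neighbor with value $2$, and the subgraph induced by the vertices with value $0$ has no isolated vertices; $\gamma_{rR}(G)$ is the minimum of $\sum_v f(v)$ over RRD functions. *)

(* Defs.v *)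
From mathcomp Require Import all_boot all_order.
Set Implicit Arguments. Unset Strict Implicit. Unset Printing Implicit Defensive.

Definition simple_graph (T : finType) (e : rel T) : Prop :=
  symmetric e /\ irreflexive e.

Definition connected_graph (T : finType) (e : rel T) : Prop :=
  forall x y : T, connect e x y.

Definition triangle_free (T : finType) (e : rel T) : Prop :=
  forall x y z : T, ~~ [&& e x y, e y z & e z x].

Definition weight (T : finType) (k : nat) (f : {ffun T -> 'I_k}) : nat :=
  \sum_(v : T) (nat_of_ord (f v)).

Definition is_RDRD (T : finType) (e : rel T) (f : {ffun T -> 'I_4}) : bool :=
  [forall v : T,
     ((nat_of_ord (f v) == 0) ==>
        ((2 <= #|[set u | e v u & nat_of_ord (f u) == 2]|)
         || [exists u, e v u && (nat_of_ord (f u) == 3)]))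
     && ((nat_of_ord (f v) == 1) ==>
        [exists u, e v u && (2 <= nat_of_ord (f u))])
     && ((nat_of_ord (f v) == 0) ==>
        [exists u, e v u && (nat_of_ord (f u) == 0)])].

Definition is_RRD (T : finType) (e : rel T) (f : {ffun T -> 'I_3}) : bool :=
  [forall v : T,
     ((nat_of_ord (f v) == 0) ==>
        [exists u, e v u && (nat_of_ord (f u) == 2)])
     && ((nat_of_ord (f v) == 0) ==>
        [exists u, e v u && (nat_of_ord (f u) == 0)])].

(* The neutral elements 3*#|T| and 2*#|T| are the weights
   of the constant-3 (resp. constant-2) functions, which are always RDRD
   (resp. RRD), so the minima below are the true minima. *)
Definition gamma_rdR (T : finType) (e : rel T) : nat :=
  \big[minn/3 * #|T|]_(f : {ffun T -> 'I_4} | is_RDRD e f) weight f.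

Definition gamma_rR (T : finType) (e : rel T) : nat :=
  \big[minn/2 * #|T|]_(f : {ffun T -> 'I_3} | is_RRD e f) weight f.

(* Main.v *)
Require Import Defs.
From mathcomp Require Import all_boot all_order.
From mathcomp Require Import zify.
Set Implicit Arguments. Unset Strict Implicit.

Lemma bigmin_le (I : eqType) (r : seq I) (P : pred I) (F : I -> nat) m g :
  g \in r -> P g -> \big[minn/m]_(i <- r | P i) F i <= F g.
Proof.
elim: r => [//|a r IH]; rewrite inE big_cons => /orP [/eqP <-|gr] Pg.
  by rewrite Pg geq_minl.
case: (P a); last exact: IH.
by rewrite geq_min IH // orbT.
Qed.

Lemma bigmin_attained (I : eqType) (r : seq I) (P : pred I) (F : I -> nat) m :
  (exists2 g, P g & F g = m) -> exists2 g, P g & F g = \big[minn/m]_(i <- r | P i) F i.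
Proof.
move=> H; apply: (big_ind (fun x => exists2 g, P g & F g = x)) => //.
  by move=> x y [g1 P1 <-] [g2 P2 <-]; rewrite /minn; case: ltnP => _;
    [exists g1|exists g2].
by move=> i Pi; exists i.
Qed.

Lemma sum2 (T : finType) (F : T -> nat) x y : x != y ->
  \sum_v F v = F x + F y + \sum_(v | (v != x) && (v != y)) F v.
Proof.
move=> xy; rewrite (bigD1 x) //= (bigD1 y) //= ?addnA.
  by congr (_ + _); apply: eq_bigl => v; rewrite andbC.
by rewrite eq_sym.
Qed.

Lemma ord4 k : k < 4 -> nat_of_ord (inord k : 'I_4) = k.
Proof. by move=> h; rewrite inordK. Qed.

Lemma ord3 k : k < 3 -> nat_of_ord (inord k : 'I_3) = k.
Proof. by move=> h; rewrite inordK. Qed.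
Lemma path3 (T : finType) (e : rel T) : symmetric e -> irreflexive e ->
  (forall x y : T, connect e x y) -> 3 <= #|T| ->
  exists a b c, [/\ e a b, e b c & a != c].
Proof.
move=> sym irr con n3.
have : uniq (enum T) by apply: enum_uniq.
move: n3; rewrite cardE; case: (enum T) => [|x [|y [|z s]]] //= _.
rewrite !inE !negb_or => /and3P [/and3P [xy xz _] /andP [yz _] _].
have /connectP [p px ly] := con x y.
case: p px ly => [|a p] /=; first by move=> _ ly; rewrite ly eqxx in xy.
case/andP=> exa _ _.
have [w [wx wa]] : exists w, w != x /\ w != a.
  case: (eqVneq y a) => [ya|ya]; last by exists y; rewrite eq_sym.
  by exists z; split; rewrite eq_sym // -ya.
have /connectP [q qx lq] := con x w.
case: (shortenP qx) lq => q' q'x uq _ lw.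
case: q' q'x uq lw => [|v1 q'] /=; first by move=> _ _ lw; rewrite lw eqxx in wx.
case/andP=> exv1 pv1.
case: (eqVneq v1 a) => [va|va].
  case: q' pv1 => [|v2 q'] /=; first by move=> _ _ lw; rewrite lw va eqxx in wa.
  case/andP => ev12 _; rewrite !inE negb_or => /andP [/andP [_ xv2] _] _.
  by exists x, a, v2; split; rewrite -?va //; case/norP: xv2.



by move=> _ _; exists a, x, v1; rewrite sym exa exv1 eq_sym va.
Qed.

Theorem proposition2p7 (T : finType) (e : rel T) :
  simple_graph e -> connected_graph e -> triangle_free e -> 3 <= #|T| ->
  gamma_rdR e <= 2 * gamma_rR e - 2.
Proof.
move=> [sym irr] con tf n3.
have [f Pf wf] : exists2 f, is_RRD e f & weight f = gamma_rR e.
  apply: bigmin_attained; exists [ffun => (inord 2 : 'I_3)].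
    by apply/forallP => v; rewrite ffunE ord3.
  rewrite /weight (eq_bigr (fun _ => 2)) => [|v _]; last by rewrite ffunE ord3.
  by rewrite sum_nat_const mulnC.
rewrite -wf.
have le_g : forall g, is_RDRD e g -> gamma_rdR e <= weight g.
  by move=> g Pg; apply: bigmin_le => //; rewrite mem_index_enum.
case: (pickP (fun v => nat_of_ord (f v) == 0)) => [v0 fv0|nz].
  have /forallP/(_ v0) := Pf; rewrite fv0 /= => /andP [/existsP [x /andP [ev0x fx]]
    /existsP [u /andP [ev0u fu]]].
  have /forallP/(_ u) := Pf; rewrite fu /= => /andP [/existsP [y /andP [euy fy]] _].
  have xy : x != y.
    apply/eqP => exy; move: (tf v0 u x); rewrite ev0u exy euy sym -exy ev0x.
    by [].
  pose g : {ffun T -> 'I_4} :=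
    [ffun v => inord (if nat_of_ord (f v) == 0 then 0 else (f v).+1)].
  have gE v : nat_of_ord (g v) = if nat_of_ord (f v) == 0 then 0 else (f v).+1.
    rewrite ffunE ord4 //; case: ifP => // _; have := ltn_ord (f v); lia.
  have Pg : is_RDRD e g.
    apply/forallP => v; rewrite !gE.
    case: ifP => fv0'; last first.
      by apply/andP; split; [apply/andP; split|]; apply/implyP => h; exfalso; lia.
    have /forallP/(_ v) := Pf; rewrite fv0' /= => /andP [/existsP [a /andP [eva fa]]
      /existsP [b /andP [evb fb]]].
    rewrite /= andbT; apply/andP; split.
      by apply/orP; right; apply/existsP; exists a; rewrite eva gE (eqP fa).
    by apply/existsP; exists b; rewrite evb gE fb.
  apply: leq_trans (le_g _ Pg) _.
  rewrite /weight (sum2 _ xy) (sum2 (fun v => nat_of_ord (f v)) xy) !gE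
    (eqP fx) (eqP fy) /=.
  have : \sum_(v | (v != x) && (v != y)) g v <=
         \sum_(v | (v != x) && (v != y)) 2 * f v.
    apply: leq_sum => v _; rewrite gE; case: ifP => //; lia.
  rewrite -big_distrr /=; lia.
have wfT : #|T| <= weight f.
  rewrite -sum1_card /weight; apply: leq_sum => v _.
  by have := nz v; rewrite /= lt0n => ->.
have [a [b [c [eab ebc ac]]]] := path3 sym irr con n3.
pose g : {ffun T -> 'I_4} :=
  [ffun v => inord (if (v == a) || (v == c) then 1 else 2)].
have gE v : nat_of_ord (g v) = if (v == a) || (v == c) then 1 else 2.
  by rewrite ffunE ord4 //; case: ifP.
have ba : (b == a) = false by apply/negbTE/eqP => ba; move: eab; rewrite ba irr.
have bc : (b == c) = false by apply/negbTE/eqP => bc; move: ebc; rewrite bc irr.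
have Pg : is_RDRD e g.
  apply/forallP => v; rewrite !gE; case: ifP => vac //=.
rewrite andbT;   apply/existsP; exists b; rewrite gE ba bc /=.
  by rewrite andbT; case/orP: vac => /eqP ->; rewrite // sym.
apply: leq_trans (le_g _ Pg) _.
have : weight g + 2 = 2 * #|T|.
  rewrite /weight (sum2 _ ac) !gE !eqxx /= orbT.
  rewrite (eq_bigr (fun _ => 2)) => [|v /andP [va vc]]; last by rewrite gE (negbTE va) (negbTE vc).
  have h1 := sum2 (fun _ : T => 2) ac.
  have h2 : \sum_(v : T) 2 = #|T| * 2 by rewrite sum_nat_const.
  simpl in h1; rewrite mulnC -h2 h1. by rewrite [1 + 1 + _ + 2]addnC addnA.
lia.
Qed.
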